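(* For any polymatroid $\mathscr P$, $\mathrm{Box}_{\mathscr P}(\mathbf t)=\text{M\''ob}_{\mathscr P}(\mathbf t)$.
   Context: Notation: $[p]=\{1,\dots,p\}$; $\mathbf e_i$ is the $i$th standard basis vector; $\le$ on $\mathbb N^p$ is componentwise, $<$ its strict version; $\mathbf t^{\mathbf n}=t_1^{n_1}\cdots t_p^{n_p}$. Polymatroid: a finite set $\mathscr P\subseteq\mathbb N^p$ that is homogeneous (all elements have the same coordinate sum) and M-convex: for all $\mathbf u,\mathbf v\in\mathscr P$ and $i$ with $u_i>v_i$ there is $j$ with $u_j<v_j$ and $\mathbf u-\mathbf e_i+\mathbf e_j\in\mathscr P$. $I(\mathscr P)=\{\mathbf n\in\mathbb N^p:\mathbf n\le\mathbf u\text{ for some }\mathbf u\in\mathscr P\}$. Box polynomial: $\mathrm{Box}_{\mathscr P}(\mathbf t)=\sum_{\mathbf n\in I(\mathscr P)}\prod_{i=1}^p f_{n_i}(t_i)$, where $f_0(t)=1$ and $f_k(t)=t^k-t^{k-1}$ for $k\ge1$. M\''obius polynomial: $P$ is the poset on $I(\mathscr P)\sqcup\{\hat1\}$ (componentwise order on $I(\mathscr P)$, $\hat1$ a new maximum) with M\''obius function $\mu_P(\mathbf m,\mathbf m)=1$, $\mu_P(\mathbf m,\mathbf n)=-\sum_{\mathbf m\le\mathbf a<\mathbf n}\mu_P(\mathbf m,\mathbf a)$ for $\mathbf m<\mathbf n$, $0$ if $\mathbf m\not\le\mathbf n$. Set $\mu_{\mathscr P}(\mathbf n)=-\mu_P(\mathbf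 n,\hat1)$ and $\text{M\''ob}_{\mathscr P}(\mathbf t)=\sum_{\mathbf n\in I(\mathscr P)}\mu_{\mathscr P}(\mathbf n)\mathbf t^{\mathbf n}$. *)

(* Defs.v *)
From HB Require Import structures.
From mathcomp Require Import all_boot all_order all_algebra.
From mathcomp Require Import finmap.
From mathcomp Require Import mpoly.

Set Implicit Arguments.
Unset Strict Implicit.
Unset Printing Implicit Defensive.

Import GRing.Theory.
Local Open Scope ring_scope.
Local Open Scope fset_scope.

Section Polymatroid.
Variable p : nat.
Implicit Types (P : {fset 'X_{1..p}}) (m n u v : 'X_{1..p}).

Definition mle m n : bool := [forall i : 'I_p, (m i <= n i)%N].

Definition homogeneous P : Prop :=
  exists d : nat, forall u, u \in P -> mdeg u = d.

(* M-convexity; u - e_i + e_j written with multinomial operations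
   (u_i > v_i >= 0, so the truncated subtraction is exact) *)
Definition M_convex P : Prop :=
  forall u v, u \in P -> v \in P -> forall i : 'I_p, (v i < u i)%N ->
    exists j : 'I_p, (u j < v j)%N /\ ((u - U_(i)) + U_(j))%MM \in P.

Definition polymatroid P : Prop := homogeneous P /\ M_convex P.

Definition inI P n : bool := has (fun u => mle n u) P.

(* a degree bound: every element of I(P) has degree < Ibound P *)
Definition Ibound P : nat := (\sum_(u <- P) mdeg u).+1.

(* the finite type carrying I(P) (as a subset) and the extra top element
   (None = \hat 1) *)
Definition Pelt P := option 'X_{1..p < Ibound P}.

Definition inPoset P (x : Pelt P) : bool :=
  if x is Some n then inI P n else true.

Definition Ple P (x y : Pelt P) : bool :=
  match x, y with
  | _, None => true
  | None, Some _ => false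
  | Some a, Some b => mle a b
  end.

(* Moebius function by the recursion mu(m,m)=1,
   mu(m,n) = - sum_{m <= a < n} mu(m,a) for m < n, 0 if m not <= n;
   computed with fuel (the fuel #|Pelt P| exceeds the length of any chain). *)
Fixpoint mob_rec P (k : nat) (x y : Pelt P) : int :=
  if x == y then 1 else
  if Ple x y then
    match k with
    | 0 => 0
    | k'.+1 => - \sum_(a : Pelt P | [&& inPoset a, Ple x a, Ple a y & a != y])
                   mob_rec k' x a
    end
  else 0.

Definition mobius_poset P (x y : Pelt P) : int := mob_rec #|{: Pelt P}| x y.

Definition muP P (n : 'X_{1..p < Ibound P}) : int :=
  - mobius_poset (Some n) None.

Definition fk (k : nat) (t : {mpoly int[p]}) : {mpoly int[p]} :=
  if k is k'.+1 then t ^+ k - t ^+ k' else 1.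

Definition BoxPoly P : {mpoly int[p]} :=
  \sum_(n : 'X_{1..p < Ibound P} | inI P n) \prod_(i < p) fk (n i) 'X_i.

Definition MobPoly P : {mpoly int[p]} :=
  \sum_(n : 'X_{1..p < Ibound P} | inI P n) (muP n) *: 'X_[n].

End Polymatroid.

(* Main.v *)
Require Import Defs.
From HB Require Import structures.
From mathcomp Require Import all_boot all_order all_algebra.
From mathcomp Require Import finmap.
From mathcomp Require Import mpoly.
From mathcomp Require Import zify.
Set Implicit Arguments.
Unset Strict Implicit.
Unset Printing Implicit Defensive.
Import GRing.Theory.
Local Open Scope ring_scope.

Lemma big_optionS (R : Type) (idx : R) (op : Monoid.com_law idx) (T : finType) (Q : pred (option T)) F :
  \big[op/idx]_(x : option T | Q x) F x =
  op (if Q None then F None else idx) (\big[op/idx]_(t : T | Q (Some t)) F (Some t)).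
Proof.
rewrite !big_mkcond {1}/index_enum [X in \big[_/_]_(_ <- X) _]unlock /=.
rewrite (_ : Finite.enum _ = None :: map Some (Finite.enum T)) //.
rewrite unlock /=.
congr (op _ _); rewrite /index_enum unlock /=.
elim: (isFinite.enum_subdef _) => //= x s ->.
  by case: (Q (Some x)); rewrite ?Monoid.mul1m.
by rewrite [in LHS]unlock.
Qed.

Lemma mdeg_card (q B : nat) (c : 'X_{1..q < B}) : (mdeg c <= #|{: 'X_{1..q < B}}|)%N.
Proof.
case: q c => [|q] c.
  by rewrite mdegE big_ord0.
have bd (k : 'I_B) : (mdeg (U_(@ord0 q) *+ k)%MM < B)%N by rewrite mdegMn mdeg1 mul1n ltn_ord.
pose h (k : 'I_B) : 'X_{1..q.+1 < B} := BMultinom (bd k).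
have hinj : injective h.
  move=> k1 k2 /(congr1 (fun x : 'X_{1..q.+1 < B} => mdeg (bmnm x))).
  by rewrite /= !mdegMn mdeg1 !mul1n => /val_inj.
apply: leq_trans (ltnW (bmdeg c)) _.
by rewrite -[X in (X <= _)%N](card_ord B); apply: leq_card hinj.
Qed.

Section S.
Variable p : nat.
Implicit Types (m n a b c : 'X_{1..p}).

Definition addf n (f : {ffun 'I_p -> bool}) : 'X_{1..p} := [multinom (n i + f i)%N | i < p].
Definition subf n (f : {ffun 'I_p -> bool}) : 'X_{1..p} := [multinom (n i - f i)%N | i < p].
Definition fle (f : {ffun 'I_p -> bool}) n := [forall i, f i ==> (0 < n i)%N].
Definition sgnf (f : {ffun 'I_p -> bool}) : int := \prod_(i < p) (if f i then -1 else 1).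

Lemma mle_refl n : mle n n.
Proof. by apply/forallP => i. Qed.

Lemma mle_trans a b c : mle a b -> mle b c -> mle a c.
Proof.
move=> /forallP h1 /forallP h2; apply/forallP => i; exact: leq_trans (h1 i) (h2 i).
Qed.

Lemma mle_mdeg a b : mle a b -> (mdeg a <= mdeg b)%N.
Proof. by move=> /forallP h; rewrite !mdegE; apply: leq_sum => i _; apply: h. Qed.

Lemma mle_mdeg_lt a b : mle a b -> a != b -> (mdeg a < mdeg b)%N.
Proof.
move=> /forallP h ne; rewrite !mdegE.
have [i hi] : exists i, (a i < b i)%N.
  apply/existsP; apply: contraR ne => /existsPn hn; apply/eqP/mnmP => i.
  by apply/eqP; rewrite eqn_leq h /= leqNgt hn.
rewrite (bigD1 i) //= [X in (_ < X)%N](bigD1 i) //=.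
by rewrite -addSn leq_add // leq_sum // => j _; apply: h.
Qed.

Lemma mle_addf n f : mle n (addf n f).
Proof. by apply/forallP => i; rewrite mnmE leq_addr. Qed.

Lemma subf_addf n f : subf (addf n f) f = n.
Proof. by apply/mnmP => i; rewrite !mnmE addnK. Qed.

Lemma addf_subf n f : fle f n -> addf (subf n f) f = n.
Proof.
move=> /forallP h; apply/mnmP => i; rewrite !mnmE.
by have := h i; case: (f i) => //= hi; [rewrite subnK | rewrite subn0 addn0].
Qed.

Lemma mle_subf n f : mle (subf n f) n.
Proof. by apply/forallP => i; rewrite mnmE leq_subr. Qed.

Lemma addf_eq n f : (addf n f == n) = (f == [ffun => false]).
Proof.
apply/eqP/eqP => [/mnmP h|->].
  apply/ffunP => i; have := h i; rewrite mnmE ffunE.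
  by case: (f i) => //= /eqP; rewrite -[X in _ == X]addn0 eqn_add2l.
by apply/mnmP => i; rewrite mnmE ffunE addn0.
Qed.

Lemma sgnf0 : sgnf [ffun => false] = 1.
Proof. by rewrite /sgnf big1 // => i _; rewrite ffunE. Qed.

Lemma prod_if (I : finType) (Q : pred I) (s : I -> int) :
  \prod_i (if Q i then s i else 0) = if [forall i, Q i] then \prod_i s i else 0.
Proof.
case: forallP => [h|/forallP/forallPn [i hi]].
  by apply: eq_bigr => i _; rewrite h.
by rewrite (bigD1 i) //= (negPf hi) mul0r.
Qed.

Variable P : {fset 'X_{1..p}}.

Lemma inI_down c b : mle c b -> inI P b -> inI P c.
Proof.
move=> h /hasP [u uP hu]; apply/hasP; exists u => //; exact: mle_trans h hu.
Qed.

Lemma inI_bound m : inI P m -> (mdeg m < Ibound P)%N.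
Proof.
move=> /hasP [u uP hu]; rewrite /Ibound ltnS.
apply: leq_trans (mle_mdeg hu) _.
rewrite (big_rem u) //=; exact: leq_addr.
Qed.


Lemma alt_sum a b : mle a b -> a != b ->
  \sum_(f : {ffun 'I_p -> bool}) (if mle (addf a f) b then sgnf f else 0) = 0.
Proof.
move=> hab ne.
have key f : (if mle (addf a f) b then sgnf f else 0) =
   \prod_i (if f i then (if (a i < b i)%N then -1 else 0) else 1).
  rewrite (eq_bigr (fun i => if f i ==> (a i < b i)%N then (if f i then -1 else 1) else 0)); last first.
    by move=> i _; case: (f i); case: (a i < b i)%N.
  rewrite prod_if; congr (if _ then _ else _).
  apply: eq_forallb => i; rewrite mnmE; move/forallP: hab => /(_ i).
  by case: (f i) => /= h; rewrite ?addn1 ?addn0.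
rewrite (eq_bigr _ (fun f _ => key f)).
rewrite -(bigA_distr_bigA (fun i (x : bool) => if x then (if (a i < b i)%N then -1 else 0) else 1 : int)) /=.
have [i hi] : exists i, (a i < b i)%N.
  apply/existsP; apply: contraR ne => /existsPn hn; apply/eqP/mnmP => i.
  by apply/eqP; rewrite eqn_leq (forallP hab i) /= leqNgt hn.
by rewrite (bigD1 i) //= big_bool /= hi addNr mul0r.
Qed.


Local Notation T := 'X_{1..p < Ibound P}.

Definition mob0 a b : int :=
  \sum_(f : {ffun 'I_p -> bool}) (if b == addf a f then sgnf f else 0).

Lemma mob0_refl a : mob0 a a = 1.
Proof.
rewrite /mob0 (bigD1 [ffun => false]) //= eq_sym addf_eq eqxx sgnf0 big1 ?addr0 //.
by move=> f hf; rewrite eq_sym addf_eq (negPf hf).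
Qed.

Lemma mob0_nle a b : ~~ mle a b -> mob0 a b = 0.
Proof.
move=> h; rewrite /mob0 big1 // => f _; case: eqP => // e.
by move: h; rewrite e mle_addf.
Qed.

Lemma sum_one (Q : pred T) (c0 : T) (s : int) : Q c0 ->
  \sum_(c : T | Q c) (if (c : 'X_{1..p}) == c0 then s else 0) = s.
Proof.
move=> h; rewrite (bigD1 c0) //= eqxx big1 ?addr0 // => c /andP [_ ne].
by case: eqP => // e; move: ne; rewrite (val_inj e) eqxx.
Qed.

Lemma sum_none (Q : pred T) v (s : int) : (forall c : T, Q c -> (c : 'X_{1..p}) != v) ->
  \sum_(c : T | Q c) (if (c : 'X_{1..p}) == v then s else 0) = 0.
Proof. by move=> h; rewrite big1 // => c /h /negPf ->. Qed.

Lemma mob_rec_eq k (a b : T) : inI P b -> (mdeg b - mdeg a <= k)%N ->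
  mob_rec k (Some a) (Some b) = mob0 a b.
Proof.
elim: k a b => [|k IH] a b hb hk /=;
  (case: (eqVneq (Some a) (Some b)) => [[->]|ne]; first by rewrite mob0_refl);
  (have neab : (a : 'X_{1..p}) != b by apply: contraNneq ne => /val_inj ->);
  (case: ifP => hle; last by rewrite mob0_nle // hle).
  by have := mle_mdeg_lt hle neab; lia.
rewrite big_optionS /= add0r.
rewrite (eq_bigr (fun c : T => mob0 a c)); last first.
  move=> c /and4P [hc hac hcb nc]; apply: IH => //.
  have : (c : 'X_{1..p}) != b by apply: contraNneq nc => /val_inj ->.
  move=> /(mle_mdeg_lt hcb); lia.
rewrite /mob0 exchange_big /=.
rewrite (eq_bigr (fun f => (if mle (addf a f) b then sgnf f else 0) -
                         (if (b : 'X_{1..p}) == addf a f then sgnf f else 0))); last first.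
  move=> f _; case: (boolP (mle (addf a f) b && (addf a f != b))) => [/andP [h1 h2]|hn].
    rewrite h1 eq_sym (negPf h2) subr0.
    have bd : (mdeg (addf a f) < Ibound P)%N by
      apply: leq_ltn_trans (mle_mdeg h1) (inI_bound hb).
    rewrite -[addf a f]/(bmnm (BMultinom bd)) sum_one //=.
    rewrite (inI_down h1 hb) mle_addf h1 /=.
    by apply: contraNneq h2 => -[<-].
  rewrite sum_none; last first.
    move=> c /and4P [hc hac hcb nc]; apply/eqP => e.
    move: hn; rewrite -e hcb /=; apply/negP/negPn.
    by apply: contraNneq nc => /val_inj ->.
  move: hn; case: (boolP (mle (addf a f) b)) => //= h1.
    by rewrite negbK eq_sym => ->; rewrite subrr.
  case: eqP => // e; by move: h1; rewrite -e mle_refl.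
by rewrite sumrB alt_sum // sub0r opprK.
Qed.


Lemma muP_eq (n : T) :
  muP n = \sum_(f : {ffun 'I_p -> bool}) (if inI P (addf n f) then sgnf f else 0).
Proof.
rewrite /muP /mobius_poset (_ : #|{: Pelt P}| = #|{: T}|.+1); last exact: card_option.
rewrite /= big_optionS /= add0r opprK.
rewrite (eq_bigr (fun c : T => mob0 n c)); last first.
  move=> c /andP [hc hnc]; apply: mob_rec_eq => //.
  have := mdeg_card c; lia.
rewrite /mob0 exchange_big /=; apply: eq_bigr => f _.
case: (boolP (inI P (addf n f))) => h.
  have bd : (mdeg (addf n f) < Ibound P)%N by exact: inI_bound h.
  rewrite -[addf n f]/(bmnm (BMultinom bd)) sum_one //=.
  by rewrite h mle_addf.
rewrite sum_none // => c /andP [hc _]; apply: contraNneq h => <-.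
by [].
Qed.


Lemma prod_fk (n : 'X_{1..p}) :
  \prod_(i < p) fk (n i) 'X_i =
  \sum_(f : {ffun 'I_p -> bool}) (if fle f n then sgnf f else 0) *: 'X_[subf n f] :> {mpoly int[p]}.
Proof.
have e i : fk (n i) 'X_i = \sum_(x : bool)
    ((if x then (if (0 < n i)%N then -1 else 0) else 1 : int) *: 'X_i ^+ (n i - x)).
  rewrite big_bool /=; case: (n i) => [|k] /=.
    by rewrite scale0r add0r scale1r.
  by rewrite scaleN1r scale1r subn1 subn0 /= addrC.
rewrite (eq_bigr _ (fun i _ => e i)).
rewrite (bigA_distr_bigA (fun i (x : bool) =>
    ((if x then (if (0 < n i)%N then -1 else 0) else 1 : int) *: 'X_i ^+ (n i - x)))) /=.
apply: eq_bigr => f _.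
rewrite scaler_prod mpolyXE_id; congr (_ *: _); last first.
  by apply: eq_bigr => i _; rewrite mnmE.
rewrite (eq_bigr (fun i => if f i ==> (0 < n i)%N then (if f i then -1 else 1) else 0)).
  by rewrite prod_if.
by move=> i _; case: (f i); case: (0 < n i)%N.
Qed.

End S.

Theorem mainTheorem5 (p : nat) (P : {fset 'X_{1..p}}) :
  polymatroid P -> BoxPoly P = MobPoly P.
Proof.
move=> _; rewrite /BoxPoly /MobPoly.
rewrite (eq_bigr _ (fun (n : 'X_{1..p < Ibound P}) _ => prod_fk n)) exchange_big /=.
rewrite (eq_bigr (fun n : 'X_{1..p < Ibound P} => \sum_(f : {ffun 'I_p -> bool})
     (if inI P (addf n f) then sgnf f else 0) *: 'X_[n])); last first.
  by move=> n _; rewrite muP_eq scaler_suml.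
rewrite [RHS]exchange_big /=; apply: eq_bigr => f _.
set s := sgnf f.
rewrite (eq_bigr (fun n : 'X_{1..p < Ibound P} => if fle f n then s *: 'X_[subf n f] else 0)); last first.
  by move=> n _; case: ifP; rewrite ?scale0r.
rewrite [RHS](eq_bigr (fun n : 'X_{1..p < Ibound P} => if inI P (addf n f) then s *: 'X_[n] else 0)); last first.
  by move=> n _; case: ifP; rewrite ?scale0r.
rewrite -!big_mkcondr /=.
pose h (m : 'X_{1..p < Ibound P}) : 'X_{1..p < Ibound P} := insubd m (addf m f).
pose h' (m : 'X_{1..p < Ibound P}) : 'X_{1..p < Ibound P} := insubd m (subf m f).
have vh' m : val (h' m) = subf m f.
  rewrite val_insubd /=; case: ifP => // /negP []. 
  exact: leq_ltn_trans (mle_mdeg (mle_subf _ _)) (bmdeg m).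
rewrite (reindex_onto h h'); last first.
  move=> n /andP [hn hf]; apply: val_inj; rewrite val_insubd vh' addf_subf //.
  by rewrite (bmdeg n).
apply: eq_big => m.
  apply/idP/idP.
    move=> /andP [/andP [hi hf] /eqP e].
    have em : (m : 'X_{1..p}) = subf (h m) f by rewrite -vh' e.
    have ea : addf m f = h m by rewrite em addf_subf.
    by rewrite ea hi andbT; apply: (inI_down (mle_addf m f)); rewrite ea.
  move=> /andP [_ hi].
  have hv : (h m : 'X_{1..p}) = addf m f by rewrite /h val_insubd (inI_bound hi).
  rewrite hv hi /=; apply/andP; split.
    by apply/forallP => i; rewrite mnmE; case: (f i) => //=; rewrite addn1.
  by apply/eqP/val_inj; rewrite vh' hv subf_addf.
by move=> /andP [_ /eqP e']; rewrite -vh' e'.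
Qed.
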